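(* Let $f:\mathbb{R}^m\to\mathbb{R}\cup\{+\infty\}$ be a proper lower semicontinuous convex function and let $\bar x\in\mathbb{R}^m$ be such that $f(\bar x)=0$. Then the following are equivalent: (i) $\min_{\|h\|=1}f'(\bar x,h)\neq 0$; (ii) there exist constants $c,\varepsilon>0$ such that for every proper lower semicontinuous convex $g:\mathbb{R}^m\to\mathbb{R}\cup\{+\infty\}$ with $\bar x\in S_g$ and $$\limsup_{x\to\bar x}\frac{|(f(x)-g(x))-(f(\bar x)-g(\bar x))|}{\|x-\bar x\|}\le\varepsilon,$$ one has $\tau_{\min}(g,\bar x)\le c$; (iii) there exist constants $c,\varepsilon>0$ such that for all $u^*\in\mathbb{R}^m$ with $\|u^*\|\le1$, one has $\tau_{\min}(g_{u^*,\varepsilon},\bar x)\le c$, where $g_{u^*,\varepsilon}(x):=f(x)+\varepsilon\langle u^*,x-\bar x\rangle$ for all $x\in\mathbb{R}^m$.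
   Context: $\mathbb{R}^m$ carries the Euclidean norm, $B(\bar x,\delta)$ is the closed ball of radius $\delta$ around $\bar x$, and $d(x,D)=\inf\{\|x-y\|:y\in D\}$ (with $\inf\emptyset=+\infty$). $f'(\bar x,h):=\lim_{t\to0^+}\frac{f(\bar x+th)-f(\bar x)}{t}$ is the directional derivative. For a proper lsc convex $g$, $S_g:=\{x: g(x)\le0\}$ and the local error bound modulus at $\bar x$ is $\tau_{\min}(g,\bar x):=\inf\{\tau>0:\exists\delta>0 \text{ with } d(x,S_g)\le\tau[g(x)]_+\ \forall x\in B(\bar x,\delta)\}$, where $[t]_+=\max\{t,0\}$ and $\inf\emptyset=+\infty$. *)

(* Defs.v *)
From HB Require Import structures.
From mathcomp Require Import all_boot all_order all_algebra.
From mathcomp Require Import all_classical all_reals all_analysis.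
Set Implicit Arguments. Unset Strict Implicit. Unset Printing Implicit Defensive.
Import Order.TTheory GRing.Theory Num.Theory.
Import numFieldNormedType.Exports.
Local Open Scope classical_set_scope.
Local Open Scope ring_scope.

Section Defs.
Variables (R : realType) (m : nat).
Notation V := 'rV[R]_m.

Definition inner (u v : V) : R := \sum_(i < m) u 0 i * v 0 i.
Definition enorm (v : V) : R := Num.sqrt (\sum_(i < m) v 0 i ^+ 2).

Definition eproper (f : V -> \bar R) : Prop :=
  (forall x, f x != -oo%E) /\ (exists x, f x \is a fin_num).

Definition elsc (f : V -> \bar R) : Prop :=
  forall (x : V) (a : R), (a%:E < f x)%E ->
    exists2 d : R, 0 < d & forall y : V, enorm (y - x) < d -> (a%:E < f y)%E.

Definition econvex (f : V -> \bar R) : Prop :=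
  forall (x y : V) (t : R), 0 < t -> t < 1 ->
    (f (t *: x + (1 - t) *: y)%R <= t%:E * f x + (1 - t)%:E * f y)%E.

Definition dir_deriv (f : V -> \bar R) (x h : V) : \bar R :=
  lim ((fun t : R => ((f (x + t *: h)%R - f x) * (t^-1)%:E)%E) @ 0^'+).

Definition sublevel0 (g : V -> \bar R) : set V := [set x | (g x <= 0)%E].

(* d(x,D) = inf {||x - y|| : y in D}, with inf of the empty set = +oo *)
Definition edist (x : V) (D : set V) : \bar R :=
  ereal_inf [set (enorm (x - y))%:E | y in D].

Definition tau_min (g : V -> \bar R) (xbar : V) : \bar R :=
  ereal_inf [set tau%:E | tau in [set tau : R | 0 < tau /\
     exists2 d : R, 0 < d & forall x, enorm (x - xbar) <= d ->
        (edist x (sublevel0 g) <= tau%:E * maxe (g x) 0)%E]].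

Definition elimsup_at (F : V -> \bar R) (xbar : V) : \bar R :=
  ereal_inf [set ereal_sup [set F x | x in [set x | 0 < enorm (x - xbar) < d]]
            | d in [set d : R | 0 < d]].

(* difference of extended reals with the convention (+oo) - (+oo) = 0 *)
Definition ediff (a b : \bar R) : \bar R :=
  if (a == +oo%E) && (b == +oo%E) then 0%E else (a - b)%E.

End Defs.

(* Main.v *)
Require Import Defs.
From HB Require Import structures.
From mathcomp Require Import all_boot all_order all_algebra.
From mathcomp Require Import all_classical all_reals all_analysis.
From mathcomp Require Import ring lra.
Import Order.TTheory GRing.Theory Num.Theory.
Import numFieldNormedType.Exports.
Local Open Scope classical_set_scope.
Local Open Scope ring_scope.
Section Vec.
Variables (R : realType) (m : nat).
Notation V := 'rV[R]_m.
Implicit Types (u v w x y : V).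

Lemma innerC u v : inner u v = inner v u.
Proof. by apply: eq_bigr => i _; rewrite mulrC. Qed.

Lemma innerDl u v w : inner (u + v) w = inner u w + inner v w.
Proof. by rewrite /inner -big_split; apply: eq_bigr => i _; rewrite mxE mulrDl. Qed.

Lemma innerZl a u v : inner (a *: u) v = a * inner u v.
Proof. by rewrite /inner mulr_sumr; apply: eq_bigr => i _; rewrite mxE mulrA. Qed.

Lemma innerNl u v : inner (- u) v = - inner u v.
Proof. by rewrite -scaleN1r innerZl mulN1r. Qed.

Lemma innerBl u v w : inner (u - v) w = inner u w - inner v w.
Proof. by rewrite innerDl innerNl. Qed.

Lemma innerDr u v w : inner w (u + v) = inner w u + inner w v.
Proof. by rewrite innerC innerDl !(innerC w). Qed.

Lemma innerZr a u v : inner v (a *: u) = a * inner v u.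
Proof. by rewrite innerC innerZl innerC. Qed.

Lemma innerBr u v w : inner w (u - v) = inner w u - inner w v.
Proof. by rewrite innerC innerBl !(innerC w). Qed.

Lemma inner_ge0 u : 0 <= inner u u.
Proof. by apply: sumr_ge0 => i _; rewrite -expr2 sqr_ge0. Qed.

Lemma enormE u : enorm u = Num.sqrt (inner u u).
Proof. by rewrite /enorm /inner; congr Num.sqrt; apply: eq_bigr => i _; rewrite expr2. Qed.

Lemma enorm_ge0 u : 0 <= enorm u.
Proof. exact: sqrtr_ge0. Qed.

Lemma enorm_sqr u : enorm u ^+ 2 = inner u u.
Proof. by rewrite enormE sqr_sqrtr // inner_ge0. Qed.

Lemma enorm0 : enorm (0 : V) = 0.
Proof. by rewrite enormE /inner big1 ?sqrtr0 // => i _; rewrite mxE mul0r. Qed.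

Lemma enormZ a u : enorm (a *: u) = `|a| * enorm u.
Proof.
rewrite enormE innerZl innerZr mulrA sqrtrM.
  by rewrite -expr2 sqrtr_sqr -enormE.
by rewrite -expr2 sqr_ge0.
Qed.

Lemma enormN u : enorm (- u) = enorm u.
Proof. by rewrite -scaleN1r enormZ normrN normr1 mul1r. Qed.

Lemma enormB u v : enorm (u - v) = enorm (v - u).
Proof. by rewrite -enormN opprB. Qed.

Lemma cauchy_schwarz u v : `|inner u v| <= enorm u * enorm v.
Proof.
set A := inner u u; set B := inner v v; set P := inner u v.
have hq s : 0 <= s ^+ 2 * A + 2 * s * P + B.
  have := inner_ge0 (s *: u + v).
  rewrite innerDl !innerDr !innerZl !innerZr (innerC v u) -/A -/B -/P.
  by congr (_ <= _); ring.
have hA : 0 <= A by apply: inner_ge0.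
have key : P ^+ 2 <= A * B.
  have [A0|Apos] := eqVneq A 0.
    suff -> : P = 0 by rewrite A0 expr0n /= mul0r.
    have [//|Pn0] := eqVneq P 0; exfalso.
    have := hq (- (B + 1) / (2 * P)); rewrite A0 mulr0 add0r.
    have -> : 2 * (- (B + 1) / (2 * P)) * P = - (B + 1).
      by field.
    by move=> h; lra.
  have Ap : 0 < A by rewrite lt_def Apos hA.
  have := hq (- P / A).
  have -> : (- P / A) ^+ 2 * A + 2 * (- P / A) * P + B = B - P ^+ 2 / A.
    by field.
  by rewrite subr_ge0 ler_pdivrMr // mulrC.
rewrite -sqrtr_sqr !enormE -sqrtrM //.
by rewrite ler_sqrt // mulr_ge0 // inner_ge0.
Qed.

Lemma enormD u v : enorm (u + v) <= enorm u + enorm v.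
Proof.
rewrite -(ger0_norm (addr_ge0 (enorm_ge0 u) (enorm_ge0 v))) -sqrtr_sqr enormE.
rewrite ler_sqrt ?sqr_ge0 // innerDl !innerDr (innerC v u) sqrrD !enorm_sqr.
have := cauchy_schwarz u v; have := ler_norm (inner u v); lra.
Qed.

Lemma inner_le u v : enorm u <= 1 -> `|inner u v| <= enorm v.
Proof.
move=> h; apply: (le_trans (cauchy_schwarz u v)).
by rewrite -[leRHS]mul1r ler_wpM2r // enorm_ge0.
Qed.

Lemma inner_self_1 u : enorm u = 1 -> inner u u = 1.
Proof. by move=> h; rewrite -enorm_sqr h expr1n. Qed.

End Vec.
Section DD.
Variables (R : realType) (m : nat).
Notation V := 'rV[R]_m.
Local Open Scope ereal_scope.

Definition dq (f : V -> \bar R) (xbar h : V) (t : R) : \bar R :=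
  ((f (xbar + t *: h)%R - f xbar) * (t^-1)%:E)%E.

Variables (f : V -> \bar R) (xbar : V).
Hypotheses (cf : econvex f) (f0 : f xbar = 0).

Lemma seg_eq (h : V) (s t : R) : (0 < t)%R ->
  (xbar + s *: h = (s / t) *: (xbar + t *: h) + (1 - s / t) *: xbar)%R.
Proof.
move=> t0; rewrite scalerDr scalerA divfK ?gt_eqF //.
by rewrite addrAC -scalerDl addrCA subrr addr0 scale1r.
Qed.

Lemma dq_mono (h : V) (s t : R) : (0 < s)%R -> (s <= t)%R -> dq f xbar h s <= dq f xbar h t.
Proof.
move=> s0 st; have t0 : (0 < t)%R by apply: lt_le_trans st.
rewrite /dq f0 !sube0.
have [->|st'] := eqVneq s t; first by [].
have slt : (s < t)%R by rewrite lt_def eq_sym st' st.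
have l0 : (0 < s / t)%R by rewrite divr_gt0.
have l1 : (s / t < 1)%R by rewrite ltr_pdivrMr // mul1r.
have := @cf (xbar + t *: h)%R xbar _ l0 l1; rewrite -seg_eq // f0 mule0 adde0 => H.
apply: (le_trans (lee_wpmul2r _ H)); first by rewrite lee_fin invr_ge0 ltW.
by rewrite muleAC -EFinM mulrAC divff ?gt_eqF // mul1r muleC.
Qed.

Definition dqset (h : V) := [set dq f xbar h t | t in [set t : R | (0 < t)%R]].

Lemma dd_inf (h : V) : dir_deriv f xbar h = ereal_inf (dqset h).
Proof.
have := @nondecreasing_at_right_cvge R (dq f xbar h) 0%R (BInfty _ false) isT.
move=> /(_ _) H.
have H' : dq f xbar h x @[x --> 0^'+] --> ereal_inf (dq f xbar h @` [set` Interval (BRight 0%R) (BInfty R false)]).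
  apply: H => x y; rewrite !in_itv /= !andbT => x0 y0 xy; exact: dq_mono.
rewrite /dir_deriv (cvg_lim (@ereal_hausdorff R) H'); congr ereal_inf.
by apply/seteqP; split => z [t ht <-]; exists t => //; move: ht => /=; rewrite in_itv /= andbT.
Qed.

Lemma dd_le (h : V) (t : R) : (0 < t)%R -> dir_deriv f xbar h <= dq f xbar h t.
Proof. by move=> t0; rewrite dd_inf; apply: ereal_inf_lbound; exists t. Qed.

Lemma dd_lt (h : V) (b : \bar R) : dir_deriv f xbar h < b ->
  exists2 t0 : R, (0 < t0)%R & forall t, (0 < t)%R -> (t <= t0)%R -> dq f xbar h t < b.
Proof.
rewrite dd_inf => /ereal_inf_lt [_ [t0 /= t00 <-] lt0].
by exists t0 => // t t_0 tt0; apply: le_lt_trans lt0; apply: dq_mono.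
Qed.

End DD.
Section Tools.
Variables (R : realType) (m : nat).
Notation V := 'rV[R]_m.

Lemma edist_le (x y : V) (S : set V) : S y -> (Defs.edist x S <= (enorm (x - y))%:E)%E.
Proof. by move=> Sy; apply: ereal_inf_lbound; exists y. Qed.

Lemma tau_le (g : V -> \bar R) (xbar : V) (c : R) : 0 < c ->
  (exists2 d : R, 0 < d & forall x, enorm (x - xbar) <= d ->
     (Defs.edist x (sublevel0 g) <= c%:E * maxe (g x) 0)%E) ->
  (tau_min g xbar <= c%:E)%E.
Proof. by move=> c0 [d d0 H]; apply: ereal_inf_lbound; exists c => //; split => //; exists d. Qed.

Lemma eb_point (g : V -> \bar R) (x : V) (c : R) : 0 < c -> g x != -oo%E ->
  (forall r : R, g x = r%:E -> 0 < r ->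
     exists2 w, sublevel0 g w & enorm (x - w) <= c * r) ->
  (Defs.edist x (sublevel0 g) <= c%:E * maxe (g x) 0)%E.
Proof.
move=> c0 gN H.
have [gle|glt] := leP (g x) 0%E.
  apply: (le_trans (@edist_le x x (sublevel0 g) gle)); rewrite subrr enorm0.
  by rewrite mule0.
move: gN glt; case E: (g x) => [r| |] // _.
  rewrite lte_fin => r0; have [w Sw wle] := H r E r0.
  apply: (le_trans (@edist_le x w (sublevel0 g) Sw)).
  by rewrite -EFinM lee_fin.
by move=> _; rewrite mulry gtr0_sg // mul1e leey.
Qed.

Lemma limsup_ext (F : V -> \bar R) (xbar : V) (e : R) :
  (elimsup_at F xbar < e%:E)%E ->
  exists2 d : R, 0 < d & forall x, 0 < enorm (x - xbar) < d -> (F x <= e%:E)%E.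
Proof.
move=> /ereal_inf_lt [_ [d /= d0 <-] lt0]; exists d => // x hx.
apply: le_trans (ltW lt0); apply: ereal_sup_ubound; by exists x.
Qed.

Lemma conv_fin (g : V -> \bar R) (a b : V) (ra rb s : R) : econvex g ->
  g a = ra%:E -> g b = rb%:E -> 0 < s -> s < 1 ->
  (g (s *: a + (1 - s) *: b)%R <= (s * ra + (1 - s) * rb)%R%:E)%E.
Proof.
move=> cg ga gb s0 s1; have := cg a b s s0 s1.
by rewrite ga gb -!EFinM -EFinD.
Qed.

Lemma F_bound (fx gx gb : \bar R) (gr : R) (r e : R) :
  0 < r -> gb = gr%:E -> fx != -oo%E -> gx != -oo%E ->
  (`| ediff fx gx - (0%E - gb) | * (r^-1)%:E <= e%:E)%E ->
  (fx = +oo%E /\ gx = +oo%E) \/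
  exists a b : R, [/\ fx = a%:E, gx = b%:E & `|a - b + gr| <= e * r].
Proof.
move=> r0 -> + + H; rewrite /ediff in H.
case: fx H => [a| |] //; case: gx => [b| |] // H _ _.
- right; exists a, b; split => //; move: H => /=.
  by rewrite sub0r opprK -EFinM lee_fin ler_pdivrMr.
- by move: H => /=; rewrite gt0_mulye ?lte_fin ?invr_gt0.
- by move: H => /=; rewrite gt0_mulye ?lte_fin ?invr_gt0.
- by left.
Qed.

End Tools.
Section D23.
Variables (R : realType) (m : nat).
Notation V := 'rV[R]_m.

Lemma fin_neqNy (r : R) : (r%:E != -oo)%E.
Proof. by []. Qed.

Lemma inner0r (u : V) : inner u 0 = 0.
Proof. by rewrite /inner big1 // => i _; rewrite mxE mulr0. Qed.

Lemma comb_sub (x y z : V) (t : R) :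
  t *: x + (1 - t) *: y - z = t *: (x - z) + (1 - t) *: (y - z).
Proof. by rewrite !scalerBr addrACA -opprD -scalerDl (addrC t) subrK scale1r. Qed.

Lemma ii_iii (f : V -> \bar R) (xbar : V) :
  eproper f -> elsc f -> econvex f -> f xbar = 0%E ->
  (exists c eps : R, [/\ 0 < c, 0 < eps &
      forall g : V -> \bar R,
        eproper g -> elsc g -> econvex g -> sublevel0 g xbar ->
        (elimsup_at (fun x =>
            (`| ediff (f x) (g x) - (f xbar - g xbar) |
               * ((enorm (x - xbar)%R)^-1)%:E)%E) xbar <= eps%:E)%E ->
        (tau_min g xbar <= c%:E)%E]) ->
  (exists c eps : R, [/\ 0 < c, 0 < eps &
      forall u : V, enorm u <= 1 ->
        (tau_min (fun x => f x + (eps * inner u (x - xbar))%R%:E)%E xbar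
           <= c%:E)%E]).
Proof.
move=> [fN [x0 fx0]] lf cf f0 [c [eps [c0 e0 H]]].
have e20 : 0 < eps / 2 by rewrite divr_gt0.
exists c, (eps / 2); split => // u u1.
pose L x := eps / 2 * inner u (x - xbar).
have LB y x : `|L y - L x| <= eps / 2 * enorm (y - x).
  rewrite /L -mulrBr -innerBr opprB addrA subrK normrM ger0_norm; last exact: ltW.
  by apply: ler_wpM2l; [exact: ltW | exact: inner_le].
have Lxbar : L xbar = 0 by rewrite /L subrr inner0r mulr0.
apply: H.
- split.
    by move=> x; case: (f x) (fN x).
  by exists x0; move: fx0; case: (f x0).
- move=> x a ax.
  have ax' : ((a - L x)%:E < f x)%E.
    move: ax; case: (f x) => [r| |] //=; last by move=> _; rewrite ltry.
    by rewrite -EFinD !lte_fin /L => h; lra.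
  have [b [ab bf]] : exists b : R, a - L x < b /\ (b%:E < f x)%E.
    move: ax'; case: (f x) => [r| |] //=.
      by rewrite lte_fin => h; exists ((a - L x + r) / 2); rewrite lte_fin; split; lra.
    by move=> _; exists (a - L x + 1); rewrite ltry; split => //; lra.
  have [d1 d10 Hd1] := lf x b bf.
  have q0 : 0 < (b - (a - L x)) / (eps / 2) by rewrite divr_gt0 // subr_gt0.
  exists (Num.min d1 ((b - (a - L x)) / (eps / 2))); first by rewrite lt_min d10 q0.
  move=> y; rewrite lt_min => /andP[hy1 hy2].
  have := Hd1 y hy1; move: hy2; rewrite ltr_pdivlMr // => hy2.
  have := LB y x; rewrite ler_norml => /andP[h1 _].
  case: (f y) => [r| |] //=; rewrite ?lte_fin ?ltry // => hr.
  by rewrite mulrC in h1; rewrite -/(L y); lra.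
- move=> x y t t0 t1 /=.
  have Lc : L (t *: x + (1 - t) *: y) = t * L x + (1 - t) * L y.
    by rewrite /L comb_sub innerDr !innerZr; ring.
  have := cf x y t t0 t1; rewrite -/(L x) -/(L y) -/(L (t *: x + (1 - t) *: y)) Lc.
  case Ex: (f x) (fN x) => [a| |] // _; case Ey: (f y) (fN y) => [b| |] // _.
  + case: (f _) (fN (t *: x + (1 - t) *: y)) => [r| |] // _.
      rewrite -!EFinM -!EFinD !lee_fin => h; nra.
  + move=> _ /=; rewrite -?EFinD -?EFinM mulry gtr0_sg ?subr_gt0 // mul1e.
    by rewrite (addey (fin_neqNy _)) leey.
  + move=> _ /=; rewrite -?EFinD -?EFinM mulry gtr0_sg ?subr_gt0 // mul1e.
    by rewrite (addye (fin_neqNy _)) leey.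
  + move=> _ /=; rewrite (addye (fin_neqNy (L y))) mulry gtr0_sg ?subr_gt0 // mul1e.
    by rewrite mulry gtr0_sg ?subr_gt0 // mul1e addye ?leey.
- by rewrite /sublevel0 /= f0 -/(L xbar) Lxbar add0e.
- apply: (@le_trans _ _ (eps / 2)%:E); last by rewrite lee_fin; lra.
  apply: ge_ereal_inf; eexists; first by exists 1; [exact: ltr01|].
  apply: ge_ereal_sup => _ [x /andP[r0 _] <-].
  rewrite f0 -/(L xbar) Lxbar.
  case: (f x) (fN x) => [a| |] // _; rewrite /ediff /=.
    rewrite -/(L x) -EFinM lee_fin ler_pdivrMr //.
    have -> : a - (a + L x) - (0 - (0 + 0)) = - (L x - L xbar) by rewrite Lxbar; ring.
    by rewrite normrN; have := LB x xbar.
  by rewrite addr0 !subrr normr0 mul0e lee_fin; exact: ltW.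
Qed.

End D23.
Section D31.
Variables (R : realType) (m : nat).
Notation V := 'rV[R]_m.

Lemma enorm_eq0 (v : V) : enorm v = 0 -> v = 0.
Proof.
rewrite enormE => /eqP; rewrite sqrtr_eq0 => hle.
have h0 : inner v v = 0 by apply/eqP; rewrite eq_le hle inner_ge0.
apply/matrixP => i j; rewrite ord1 mxE.
have := @psumr_eq0P _ _ predT (fun k => v 0 k * v 0 k) _ h0 j isT.
move=> H; have hj : v 0 j * v 0 j = 0 by apply: H => k _; rewrite -expr2 sqr_ge0.
by move/eqP: hj; rewrite mulf_eq0 orbb => /eqP.
Qed.

Lemma polar (v : V) : 0 < enorm v ->
  enorm ((enorm v)^-1 *: v) = 1 /\ v = enorm v *: ((enorm v)^-1 *: v).
Proof.
move=> v0; split.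
  by rewrite enormZ ger0_norm ?invr_ge0 ?ltW // mulVf // gt_eqF.
by rewrite scalerA divff ?gt_eqF // scale1r.
Qed.

Lemma xt_sub (xbar h : V) (t : R) : xbar + t *: h - xbar = t *: h.
Proof. by rewrite (addrC xbar) addrK. Qed.

Lemma f_ge0 (f : V -> \bar R) (xbar : V) : econvex f -> f xbar = 0%E ->
  (forall h, enorm h = 1 -> (0 <= dir_deriv f xbar h)%E) ->
  forall y, (0 <= f y)%E.
Proof.
move=> cf f0 H y.
have [ye|yne] := eqVneq y xbar; first by rewrite ye f0.
have t0 : 0 < enorm (y - xbar).
  rewrite lt_def enorm_ge0 andbT; apply/eqP => /enorm_eq0/eqP.
  by rewrite subr_eq0 (negbTE yne).
have [h1 hy] := polar (y - xbar) t0.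
set t := enorm (y - xbar) in t0 h1 hy; set h := (t^-1 *: (y - xbar)) in h1 hy.
have := le_trans (H h h1) (@dd_le R m f xbar cf f0 h _ t0).
rewrite /dq -hy (addrC xbar) subrK f0 sube0.
case: (f y) => [a| |] //=; rewrite ?leey //.
  by rewrite -EFinM !lee_fin pmulr_lge0 // invr_gt0.
by rewrite mulNyr gtr0_sg ?invr_gt0 // mul1e.
Qed.

Lemma iii_i (f : V -> \bar R) (xbar : V) :
  eproper f -> econvex f -> f xbar = 0%E ->
  (exists c eps : R, [/\ 0 < c, 0 < eps &
      forall u : V, enorm u <= 1 ->
        (tau_min (fun x => f x + (eps * inner u (x - xbar))%R%:E)%E xbar
           <= c%:E)%E]) ->
  ereal_inf [set dir_deriv f xbar h | h in [set h | enorm h = 1]] != 0%E.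
Proof.
move=> [fN _] cf f0 [c [eps [c0 e0 H]]].
apply/negP => /eqP I0.
have pge0 h : enorm h = 1 -> (0 <= dir_deriv f xbar h)%E.
  by move=> h1; rewrite -I0; apply: ereal_inf_lbound; exists h.
have fge0 := f_ge0 f xbar cf f0 pge0.
set K := 4 * c.
have K0 : 0 < K by rewrite mulr_gt0.
have : (ereal_inf [set dir_deriv f xbar h | h in [set h | enorm h = 1%R]] < (K^-1)%:E)%E.
  by rewrite I0 lte_fin invr_gt0.
move=> /ereal_inf_lt [_ [h /= h1 <-] hlt].
have [t0 t00 Ht0] := @dd_lt R m f xbar cf f0 h _ hlt.
set lam := Num.min 1 (K^-1 / eps).
have lam0 : 0 < lam by rewrite lt_min ltr01 divr_gt0 // invr_gt0.
have lam1 : lam <= 1 by rewrite ge_min lexx.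
have elam : eps * lam <= K^-1.
  by rewrite mulrC -ler_pdivlMr // ge_min lexx orbT.
set u := lam *: h.
have u1 : enorm u <= 1 by rewrite enormZ h1 mulr1 ger0_norm // ltW.
have Hu := H u u1.
have : ((2 * c)%:E <= tau_min (fun x => f x + (eps * inner u (x - xbar))%R%:E)%E xbar)%E.
  apply/ereal_infP => _ [tau [tau0 [d d0 Hd]] <-].
  set t := Num.min t0 d.
  have t0' : 0 < t by rewrite lt_min t00 d0.
  set x := xbar + t *: h.
  have xx : x - xbar = t *: h by rewrite xt_sub.
  have nx : enorm (x - xbar) = t by rewrite xx enormZ h1 mulr1 ger0_norm // ltW.
  have := Hd x; rewrite nx ge_min lexx orbT => /(_ isT).
  have tt0 : t <= t0 by rewrite ge_min lexx.
  have := Ht0 t t0' tt0.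
  rewrite /dq f0 sube0 -/x.
  have ginner : eps * inner u (x - xbar) = eps * lam * t.
    by rewrite xx /u innerZl innerZr inner_self_1 //; ring.
  rewrite ginner.
  case Efx : (f x) (fN x) (fge0 x) => [a| |] // _ a0; last first.
    by rewrite mulyr gtr0_sg ?invr_gt0 // mul1e ltNge leey.
  rewrite -EFinM lte_fin ltr_pdivrMr // => ha.
  rewrite lee_fin in a0.
  have G0 : 0 < a + eps * lam * t by rewrite ltr_pwDr ?mulr_gt0.
  rewrite -EFinD max_l; last by rewrite lee_fin ltW.
  move=> Ed.
  have Et : (t%:E <= Defs.edist x (sublevel0 (fun x0 => f x0 + (eps * inner u (x0 - xbar))%R%:E)%E))%E.
    apply/ereal_infP => _ [y Sy <-]; rewrite lee_fin.
    move: Sy; rewrite /sublevel0 /=.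
    case Efy: (f y) (fge0 y) => [b| |]; first last.
    - by move: (fN y); rewrite Efy.
    - by move=> _; rewrite (addye (@fin_neqNy R _)) leye_eq.
    move=> b0 Sy; rewrite lee_fin in b0.
    have {Sy} Sy : b + eps * inner u (y - xbar) <= 0.
      by move: Sy; rewrite -EFinD lee_fin.
    have hI : inner h (y - xbar) <= 0.
      have : eps * lam * inner h (y - xbar) <= 0.
        by move: Sy; rewrite /u innerZl mulrA => Sy; lra.
      by rewrite pmulr_rle0 // mulr_gt0.
    have : t <= inner h (x - y).
      rewrite (_ : x - y = (x - xbar) - (y - xbar)); last by rewrite opprB addrA subrK.
      by rewrite innerBr xx innerZr inner_self_1 // mulr1; lra.
    move=> tle; apply: (le_trans tle); apply: le_trans (ler_norm _) _.
    by apply: inner_le; rewrite h1.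
  have := le_trans Et Ed; rewrite -EFinM lee_fin => tG.
  have hlt2 : a + eps * lam * t < 2 * (t * K^-1).
    have : eps * lam * t <= K^-1 * t by rewrite ler_wpM2r // ltW.
    by rewrite mulrC in ha; lra.
  have : t < tau * (2 * (t * K^-1)).
    by apply: (le_lt_trans tG); rewrite ltr_pM2l.
  have e : tau * (2 * (t / K)) = t * (tau * 2 / K) by ring.
  rewrite e -[X in X < _]mulr1 ltr_pM2l // ltr_pdivlMr // mul1r => hk.
  by rewrite lee_fin; rewrite /K in hk; lra.
move=> H2; have := le_trans H2 Hu; rewrite lee_fin; lra.
Qed.

End D31.
Section D12.
Variables (R : realType) (m : nat).
Notation V := 'rV[R]_m.

Lemma vec_id1 (x z : V) (s : R) : x - (s *: z + (1 - s) *: x) = s *: (x - z).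
Proof. by apply/matrixP => i j; rewrite !mxE; ring. Qed.

Lemma vec_id2 (x xbar : V) (s : R) : x - (s *: x + (1 - s) *: xbar) = (1 - s) *: (x - xbar).
Proof. by apply/matrixP => i j; rewrite !mxE; ring. Qed.

Lemma vec_id3 (x y z : V) : x - z = (x - y) + (y - z).
Proof. by apply/matrixP => i j; rewrite !mxE; ring. Qed.

Lemma gxbar_fin (g : V -> \bar R) (xbar : V) : eproper g -> sublevel0 g xbar ->
  exists gb : R, g xbar = gb%:E /\ gb <= 0.
Proof.
move=> [gN _]; rewrite /sublevel0 /=.
case: (g xbar) (gN xbar) => [gb| |] // _.
by rewrite lee_fin => h; exists gb.
Qed.

Definition condii (f : V -> \bar R) (xbar : V) :=
    exists c eps : R, [/\ 0 < c, 0 < eps &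
      forall g : V -> \bar R,
        eproper g -> elsc g -> econvex g -> sublevel0 g xbar ->
        (elimsup_at (fun x =>
            (`| ediff (f x) (g x) - (f xbar - g xbar) |
               * ((enorm (x - xbar)%R)^-1)%:E)%E) xbar <= eps%:E)%E ->
        (tau_min g xbar <= c%:E)%E].

Lemma i_ii_neg (f : V -> \bar R) (xbar : V) :
  eproper f -> econvex f -> f xbar = 0%E ->
  (ereal_inf [set dir_deriv f xbar h | h in [set h | enorm h = 1%R]] < 0)%E ->
  condii f xbar.
Proof.
move=> [fN _] cf f0 /ereal_inf_lt [_ [h /= h1 <-] hneg].
have [be [be0 hb]] : exists be : R, 0 < be /\ (dir_deriv f xbar h < (- be)%:E)%E.
  move: hneg; case: (dir_deriv f xbar h) => [r| |] //.
    by rewrite lte_fin => r0; exists (- r / 2); rewrite lte_fin; split; lra.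
  by move=> _; exists 1; rewrite ltNyr.
have [t0 t00 Ht0] := @dd_lt R m f xbar cf f0 h _ hb.
exists (4 / be), (be / 4); split; rewrite ?divr_gt0 //.
move=> g gp lg cg gS hls.
have [gb [Egb gb0]] := gxbar_fin g xbar gp gS.
have [gN _] := gp.
have : (elimsup_at (fun x =>
            (`| ediff (f x) (g x) - (f xbar - g xbar) |
               * ((enorm (x - xbar)%R)^-1)%:E)%E) xbar < (be / 2)%:E)%E.
  by apply: le_lt_trans hls _; rewrite lte_fin; lra.
move=> /limsup_ext [d d0 Hd].
set t := Num.min t0 (d / 2).
have t0' : 0 < t by rewrite lt_min t00 divr_gt0.
have tt0 : t <= t0 by rewrite ge_min lexx.
have td : t < d by rewrite gt_min; apply/orP; right; lra.
set z := xbar + t *: h.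
have nz : enorm (z - xbar) = t by rewrite xt_sub enormZ h1 mulr1 ger0_norm // ltW.
have := Ht0 t t0' tt0; rewrite /dq f0 sube0 -/z.
have := Hd z; rewrite nz t0' td => /(_ isT) /=; rewrite f0 Egb.
move=> /(@F_bound R _ _ _ _ _ _ t0' (erefl _) (fN z) (gN z)) [[-> _]|[a [b [Efz Egz hab]]]].
  by rewrite mulyr gtr0_sg ?invr_gt0 // mul1e ltNge leey.
rewrite Efz -EFinM lte_fin ltr_pdivrMr // => ha.
have hbz : b < - (be * t / 2).
  move: hab; rewrite ler_norml => /andP[h2 h3]; lra.
apply: tau_le; first by rewrite divr_gt0.
exists t => // x hx.
apply: eb_point; [by rewrite divr_gt0 | exact: gN | move=> r Egx r0].
have bt : 0 < be * t by rewrite mulr_gt0.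
have rb : 0 < r - b by lra.
set s := r / (r - b).
have s0 : 0 < s by rewrite divr_gt0.
have s1 : s < 1 by rewrite ltr_pdivrMr // mul1r; lra.
exists (s *: z + (1 - s) *: x).
  rewrite /sublevel0 /=; apply: (le_trans (@conv_fin R m _ _ _ _ _ _ cg Egz Egx s0 s1)).
  have -> : s * b + (1 - s) * r = 0 by rewrite /s; field; rewrite gt_eqF.
  by [].
rewrite vec_id1 enormZ ger0_norm; last exact: ltW.
have nxz : enorm (x - z) <= t + t.
  rewrite (vec_id3 x xbar z); apply: le_trans (@enormD R m _ _) _.
  by rewrite (@enormB R m xbar z) nz lerD2r.
apply: (le_trans (ler_wpM2l (ltW s0) nxz)).
rewrite /s mulrAC ler_pdivrMr //.
have -> : 4 / be * r * (r - b) = r * (4 * (r - b) / be) by ring.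
rewrite ler_pM2l // ler_pdivlMr //; lra.
Qed.

Lemma f_lb (f : V -> \bar R) (xbar : V) (al : R) : econvex f -> f xbar = 0%E ->
  (forall x, f x != -oo%E) ->
  (forall h, enorm h = 1 -> (al%:E <= dir_deriv f xbar h)%E) ->
  forall y, ((al * enorm (y - xbar))%:E <= f y)%E.
Proof.
move=> cf f0 fN H y.
have [ye|yne] := eqVneq y xbar; first by rewrite ye f0 subrr enorm0 mulr0.
have t0 : 0 < enorm (y - xbar).
  rewrite lt_def enorm_ge0 andbT; apply/eqP => /enorm_eq0/eqP.
  by rewrite subr_eq0 (negbTE yne).
have [h1 hy] := @polar R m (y - xbar) t0.
set t := enorm (y - xbar) in t0 h1 hy *; set h := (t^-1 *: (y - xbar)) in h1 hy.
have := le_trans (H h h1) (@dd_le R m f xbar cf f0 h _ t0).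
rewrite /dq -hy (addrC xbar) subrK f0 sube0.
case: (f y) (fN y) => [a| |] // _; rewrite ?leey //.
by rewrite -EFinM !lee_fin ler_pdivlMr // mulrC.
Qed.

Lemma i_ii_pos (f : V -> \bar R) (xbar : V) :
  eproper f -> econvex f -> f xbar = 0%E ->
  (0 < ereal_inf [set dir_deriv f xbar h | h in [set h | enorm h = 1%R]])%E ->
  condii f xbar.
Proof.
move=> [fN _] cf f0 hpos.
have [al [al0 hal]] : exists al : R, 0 < al /\ forall h, enorm h = 1 -> (al%:E <= dir_deriv f xbar h)%E.
  move: hpos; case E: (ereal_inf _) => [r| |] //.
    rewrite lte_fin => r0; exists r; split => // h h1.
    by rewrite -E; apply: ereal_inf_lbound; exists h.
  move=> _; exists 1; split => // h h1.
  have : (+oo <= dir_deriv f xbar h)%E by rewrite -E; apply: ereal_inf_lbound; exists h.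
  by rewrite leye_eq => /eqP ->; rewrite leey.
have flb := @f_lb f xbar al cf f0 fN hal.
exists (2 / al), (al / 4); split; rewrite ?divr_gt0 //.
move=> g gp lg cg gS hls.
have [gb [Egb gb0]] := gxbar_fin g xbar gp gS.
have [gN _] := gp.
have : (elimsup_at (fun x =>
            (`| ediff (f x) (g x) - (f xbar - g xbar) |
               * ((enorm (x - xbar)%R)^-1)%:E)%E) xbar < (al / 2)%:E)%E.
  by apply: le_lt_trans hls _; rewrite lte_fin; lra.
move=> /limsup_ext [d d0 Hd].
apply: tau_le; first by rewrite divr_gt0.
exists (d / 2); first by rewrite divr_gt0.
move=> x hx.
apply: eb_point; [by rewrite divr_gt0 | exact: gN | move=> r Egx r0].
have [xe|xne] := eqVneq x xbar.
  have : g xbar = r%:E by rewrite -xe.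
  by rewrite Egb => -[rE]; rewrite -rE in r0; move: (lt_le_trans r0 gb0); rewrite ltxx.
set rho := enorm (x - xbar).
have rho0 : 0 < rho.
  rewrite lt_def enorm_ge0 andbT; apply/eqP => /enorm_eq0/eqP.
  by rewrite subr_eq0 (negbTE xne).
have rd : rho < d by rewrite /rho; lra.
have := Hd x; rewrite -/rho rho0 rd => /(_ isT) /=.
rewrite f0 Egb.
move=> /(@F_bound R _ _ _ _ _ _ rho0 (erefl _) (fN x) (gN x)) [[_ E]|[a [b [Efx Egx' hab]]]].
  by move: Egx; rewrite E.
move: Egx'; rewrite Egx => -[rb]; rewrite -rb in hab.
have := flb x; rewrite Efx lee_fin -/rho => ha.
have hr : al * rho <= 2 * (r - gb).
  by move: hab; rewrite ler_norml => /andP[h2 h3]; lra.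
have [gbe|gbne] := eqVneq gb 0.
  exists xbar; first by rewrite /sublevel0 /= Egb gbe.
  rewrite -/rho; move: hr; rewrite gbe subr0 => hr.
  by rewrite mulrAC ler_pdivlMr // mulrC.
have gbn : gb < 0 by rewrite lt_def eq_sym gbne gb0.
have rg : 0 < r - gb by lra.
set s := - gb / (r - gb).
have s0 : 0 < s by rewrite divr_gt0 // oppr_gt0.
have s1 : s < 1 by rewrite ltr_pdivrMr // mul1r; lra.
exists (s *: x + (1 - s) *: xbar).
  rewrite /sublevel0 /=; apply: (le_trans (@conv_fin R m _ _ _ _ _ _ cg Egx Egb s0 s1)).
  have -> : s * r + (1 - s) * gb = 0 by rewrite /s; field; rewrite gt_eqF.
  by [].
rewrite vec_id2 enormZ -/rho.
have -> : 1 - s = r / (r - gb) by rewrite /s; field; rewrite gt_eqF.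
rewrite ger0_norm; last by rewrite divr_ge0 // ltW.
rewrite mulrAC ler_pdivrMr //.
have -> : 2 / al * r * (r - gb) = r * (2 * (r - gb) / al) by ring.
rewrite ler_pM2l // ler_pdivlMr //; lra.
Qed.

End D12.
Theorem theorem5 (R : realType) (m : nat) (f : 'rV[R]_m -> \bar R)
    (xbar : 'rV[R]_m) :
  eproper f -> elsc f -> econvex f -> f xbar = 0%E ->
  let cond_i :=
    ereal_inf [set dir_deriv f xbar h | h in [set h | enorm h = 1]] != 0%E in
  let cond_ii :=
    exists c eps : R, [/\ 0 < c, 0 < eps &
      forall g : 'rV[R]_m -> \bar R,
        eproper g -> elsc g -> econvex g -> sublevel0 g xbar ->
        (elimsup_at (fun x =>
            (`| ediff (f x) (g x) - (f xbar - g xbar) |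
               * ((enorm (x - xbar)%R)^-1)%:E)%E) xbar <= eps%:E)%E ->
        (tau_min g xbar <= c%:E)%E] in
  let cond_iii :=
    exists c eps : R, [/\ 0 < c, 0 < eps &
      forall u : 'rV[R]_m, enorm u <= 1 ->
        (tau_min (fun x => f x + (eps * inner u (x - xbar))%R%:E)%E xbar
           <= c%:E)%E] in
  (cond_i <-> cond_ii) /\ (cond_ii <-> cond_iii).
Proof.
move=> fp lf cf f0 ci cii ciii.
have H12 : ci -> cii.
  rewrite /ci neq_lt => /orP[hn|hp].
    exact: (@i_ii_neg R m f xbar fp cf f0 hn).
  exact: (@i_ii_pos R m f xbar fp cf f0 hp).
have H23 : cii -> ciii by exact: (@ii_iii R m f xbar fp lf cf f0).
have H31 : ciii -> ci by exact: (@iii_i R m f xbar fp cf f0).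
split; split.
- exact: H12.
- by move/H23/H31.
- exact: H23.
- by move/H31/H12.
Qed.
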